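(* Let $\Sigma$ be a finite alphabet with at least two symbols, $z\in\{B,A\}$, and $P=\Sigma^{\mathbb{N}}\setminus\mathrm{Ult}$. Then $P$ is a perfect subset of $(\Sigma^{\mathbb{N}},\tau_z)$ (closed, with no isolated points in the subspace topology) and $\mathrm{Ult}$ is countable and open; i.e. $P\cup\mathrm{Ult}$ is the Cantor–Bendixson decomposition of $(\Sigma^{\mathbb{N}},\tau_z)$.
   Context: $\mathrm{Ult}=\{u\cdot v^\omega: u,v\in\Sigma^*, v\neq\emptyset\}$, the ultimately periodic infinite words. A language $L\subseteq\Sigma^{\mathbb{N}}$ is $\omega$-regular if accepted by a Büchi automaton $(\Sigma,Q,Q_i,Q_f,\delta)$ (a run on $\sigma$ is $(q_n)_n$ with $q_0\in Q_i$, $(q_n,\sigma(n),q_{n+1})\in\delta$; accepting iff $q_n\in Q_f$ for infinitely many $n$). $\tau_C$ is the Cantor topology on $\Sigma^{\mathbb{N}}$; $\tau_B$ is generated by the $\omega$-regular languages; $\tau_A$ is generated by the $\tau_C$-closed $\omega$-regular languages. *)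

(* Defs.v *)
From mathcomp Require Import all_boot.
Set Implicit Arguments. Unset Strict Implicit. Unset Printing Implicit Defensive.

Definition word (Sigma : Type) := nat -> Sigma.

(* Ultimately periodic words u v^omega, v nonempty. *)
Definition Ult (Sigma : Type) (s : word Sigma) : Prop :=
  exists (u v : seq Sigma), v <> [::] /\
    forall n, s n = if n < size u then nth (s n) u n
                    else nth (s n) v ((n - size u) %% size v).

Record buchi (Sigma : Type) := Buchi {
  bstate : finType;
  binit : {set bstate};
  bfinal : {set bstate};
  bdelta : bstate -> Sigma -> bstate -> bool }.
Arguments bstate {Sigma}. Arguments binit {Sigma}. Arguments bfinal {Sigma}. Arguments bdelta {Sigma}.

Definition buchi_run (Sigma : Type) (A : buchi Sigma) (s : word Sigma)
  (r : nat -> bstate A) : Prop :=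
  r 0 \in binit A /\ forall n, bdelta A (r n) (s n) (r n.+1).

Arguments buchi_run {Sigma}.
Definition buchi_accepts (Sigma : Type) (A : buchi Sigma) (s : word Sigma) : Prop :=
  exists r, buchi_run A s r /\ forall N, exists n, N <= n /\ r n \in bfinal A.

Arguments buchi_accepts {Sigma}.
Definition omega_regular (Sigma : Type) (L : word Sigma -> Prop) : Prop :=
  exists A : buchi Sigma, forall s, L s <-> buchi_accepts A s.

Definition cantor_open (Sigma : Type) (U : word Sigma -> Prop) : Prop :=
  forall s, U s -> exists n, forall t : word Sigma,
    (forall i, i < n -> t i = s i) -> U t.

Definition cantor_closed (Sigma : Type) (C : word Sigma -> Prop) : Prop :=
  cantor_open (fun s => ~ C s).

Inductive gen_open (X : Type) (F : (X -> Prop) -> Prop) : (X -> Prop) -> Prop :=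
| go_base U : F U -> gen_open F U
| go_full : gen_open F (fun _ => True)
| go_inter U V : gen_open F U -> gen_open F V -> gen_open F (fun x => U x /\ V x)
| go_union (S : (X -> Prop) -> Prop) :
    (forall U, S U -> gen_open F U) -> gen_open F (fun x => exists U, S U /\ U x)
| go_ext U V : gen_open F U -> (forall x, U x <-> V x) -> gen_open F V.

Inductive topo_choice := zB | zA.

Definition tau_open (Sigma : Type) (z : topo_choice) : (word Sigma -> Prop) -> Prop :=
  match z with
  | zB => gen_open (fun L => omega_regular L)
  | zA => gen_open (fun L => omega_regular L /\ cantor_closed L)
  end.

Definition tau_closed (Sigma : Type) (z : topo_choice) (C : word Sigma -> Prop) : Prop :=
  tau_open z (fun s => ~ C s).

Definition no_isolated_points (Sigma : Type) (z : topo_choice) (C : word Sigma -> Prop) : Prop :=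
  forall s, C s -> forall U, tau_open z U -> U s -> exists t, C t /\ U t /\ t <> s.

Definition perfect_in (Sigma : Type) (z : topo_choice) (C : word Sigma -> Prop) : Prop :=
  tau_closed z C /\ no_isolated_points z C.

Definition countable_set (X : Type) (C : X -> Prop) : Prop :=
  exists f : nat -> X, forall x, C x -> exists n, f n = x.

(* Main.v *)
Require Import Defs.
From mathcomp Require Import all_boot.
From mathcomp Require Import zify.
From Stdlib Require Import Classical FunctionalExtensionality.
Set Implicit Arguments. Unset Strict Implicit. Unset Printing Implicit Defensive.

Definition periodic (T : Type) (s : nat -> T) N p :=
  0 < p /\ forall n, N <= n -> s (n + p) = s n.

Lemma shift (T : Type) (s : nat -> T) N p :
  (forall n, N <= n -> s (n + p) = s n) ->
  forall k n, N <= n -> s (n + k * p) = s n.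
Proof.
move=> H; elim=> [|k IH] n Hn; first by rewrite mul0n addn0.
have ->: n + k.+1 * p = (n + k * p) + p by rewrite mulSn; lia.
rewrite H ?IH //; lia.
Qed.

Lemma Ult_per (Sigma : Type) (s : word Sigma) :
  Ult s -> exists N p, periodic s N p.
Proof.
case=> u [v [hv H]].
have p0: 0 < size v by case: v hv H.
exists (size u), (size v); split=> // n hn.
rewrite (H (n + size v)) (H n).
have h1: size u <= n + size v by lia.
rewrite ltnNge h1 ltnNge hn /= -addnBAC // modnDr.
by apply: set_nth_default; rewrite ltn_pmod.
Qed.

Lemma per_Ult (Sigma : Type) (s : word Sigma) N p :
  periodic s N p -> Ult s.
Proof.
case=> p0 H.
exists (mkseq s N), (mkseq (fun k => s (N + k)) p); split.
  by move/(congr1 size); rewrite size_mkseq /=; lia.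
move=> n; rewrite !size_mkseq; case: ltnP => h; first by rewrite nth_mkseq.
rewrite nth_mkseq ?ltn_pmod //.
have e: N + (n - N) %% p + (n - N) %/ p * p = n.
  move: (divn_eq (n - N) p); set a := _ %/ _; set b := _ %% _; lia.
have := shift H ((n - N) %/ p) (leq_addr ((n - N) %% p) N).
by rewrite e.
Qed.

Definition nxt N p q := if q.+1 < N + p then q.+1 else N.

Lemma nxt_inv (T : Type) (s : nat -> T) N p : periodic s N p ->
  forall q : nat -> nat, q 0 = 0 -> (forall n, q n.+1 = nxt N p (q n)) ->
  forall n, q n < N + p /\ s (q n) = s n.
Proof.
case=> p0 H q q0 qS.
have inv: forall n, q n < N + p /\ exists k, n = q n + k * p /\ (0 < k -> N <= q n).
  elim=> [|n [lt [k [e hk]]]]; first by rewrite q0; split; [lia| exists 0; lia].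
  rewrite qS /nxt; case: ifP => h.
    split=> //; exists k; lia.
  split; first lia.
  exists k.+1; rewrite mulSn; lia.
move=> n; have [lt [k [e hk]]] := inv n; split=> //.
case: k e hk => [|k] e hk; first by rewrite {2}e mul0n addn0.
by rewrite {2}e (shift H) //; apply: hk.
Qed.

Fixpoint qf N p n := match n with 0 => 0 | n'.+1 => nxt N p (qf N p n') end.

Definition upA (Sigma : finType) (s : word Sigma) N p : buchi Sigma :=
  @Buchi Sigma 'I_(N + p) [set i : 'I_(N + p) | val i == 0] setT
    (fun i a j => (a == s i) && (val j == nxt N p i)).

Lemma upA_ok (Sigma : finType) (s : word Sigma) N p : periodic s N p ->
  forall t, t = s <-> buchi_accepts (upA s N p) t.
Proof.
move=> hp t; split.
  move=> ->.
  have hq := nxt_inv hp (q := qf N p) erefl (fun n => erefl).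
  exists (fun n => Ordinal (proj1 (hq n))); split; last first.
    by move=> M; exists M; split=> //; rewrite in_setT.
  split; first by rewrite inE.
  by move=> n /=; rewrite (proj2 (hq n)) !eqxx.
case=> r [[r0 rS] _].
have hq := nxt_inv hp (q := fun n => val (r n)).
have q0 : val (r 0) = 0 by move: r0; rewrite inE => /eqP.
have qS : forall n, val (r n.+1) = nxt N p (val (r n)).
  by move=> n; case/andP: (rS n) => _ /eqP.
apply: functional_extensionality => n.
case/andP: (rS n) => /eqP -> _.
exact: (proj2 (hq q0 qS n)).
Qed.

Lemma single_closed (Sigma : Type) (s : word Sigma) :
  cantor_closed (fun t => t = s).
Proof.
move=> t hts.
have [i hi]: exists i, ~ t i = s i.
  by apply: not_all_ex_not => H; apply: hts; apply: functional_extensionality.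
exists i.+1 => t' ht' e; apply: hi.
by rewrite -(ht' i (ltnSn i)) e.
Qed.

Lemma single_reg (Sigma : finType) (s : word Sigma) :
  Ult s -> omega_regular (fun t => t = s).
Proof.
move/Ult_per=> [N [p hp]]; exists (upA s N p); exact: upA_ok.
Qed.

Lemma ult_open (Sigma : finType) (F : (word Sigma -> Prop) -> Prop) :
  (forall s, Ult s -> F (fun t => t = s)) -> gen_open F (@Ult Sigma).
Proof.
move=> hF.
apply: (go_ext (go_union (S := fun U => exists s, Ult s /\ forall t, U t <-> t = s) _)).
  move=> U [s [hs hU]]; apply: (go_ext (go_base (hF s hs))) => t.
  by split; move/hU.
move=> x; split.
  by case=> U [[s [hs hU]] hx]; move/hU: hx => ->.
by move=> hx; exists (fun t => t = x); split => //; exists x; split.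
Qed.

Definition del (T : Type) (s : nat -> T) i j :=
  fun n => if n < i then s n else s (n + (j - i)).

Definition colorable (Sigma : Type) (U : word Sigma -> Prop) :=
  forall s, U s -> exists (T : finType) (c : nat -> T),
    forall i j, i < j -> c i = c j -> U (del s i j).

Lemma reg_col (Sigma : Type) (A : buchi Sigma) : colorable (buchi_accepts A).
Proof.
move=> s [r [[r0 rS] fin]]; exists (bstate A), r => i j ij e.
exists (fun n => if n <= i then r n else r (n + (j - i))); split; [split|].
- by rewrite leq0n.
- move=> n; rewrite /del; case: (ltngtP n i) => h.
  + exact: rS.
  + have ->: n.+1 + (j - i) = (n + (j - i)).+1 by lia.
    by apply: rS.
  + subst n.
    have ->: i + (j - i) = j by lia.
    have ->: i.+1 + (j - i) = j.+1 by lia.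
    by rewrite e; apply: rS.
- move=> M; have [m [hm fm]] := fin (M + j).+1; exists (m - (j - i)); split; first lia.
  have ->: (m - (j - i) <= i) = false by lia.
  by have ->: m - (j - i) + (j - i) = m by lia.
Qed.

Lemma gen_col (Sigma : Type) (F : (word Sigma -> Prop) -> Prop) :
  (forall L, F L -> omega_regular L) -> forall U, gen_open F U -> colorable U.
Proof.
move=> hF U; elim => {U}.
- move=> U FU s; have [A hA] := hF U FU; move/hA=> hs.
  have [T [c hc]] := reg_col hs; exists T, c => i j ij e; apply/hA; exact: hc.
- by move=> s _; exists unit, (fun _ => tt).
- move=> U V _ IU _ IV s [hu hv].
  have [T1 [c1 h1]] := IU s hu; have [T2 [c2 h2]] := IV s hv.
  exists (T1 * T2)%type, (fun n => (c1 n, c2 n)) => i j ij [e1 e2].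
  by split; [apply: h1 | apply: h2].
- move=> S _ IS s [U [SU Us]]; have [T [c hc]] := IS U SU s Us.
  by exists T, c => i j ij e; exists U; split => //; apply: hc.
- move=> U V _ IU hUV s /hUV hs; have [T [c hc]] := IU s hs.
  by exists T, c => i j ij e; apply/hUV; apply: hc.
Qed.

Lemma pigeon (T : finType) (c : nat -> T) : exists i j, i < j /\ c i = c j.
Proof.
apply: NNPP => H.
have inj: injective (fun x : 'I_#|T|.+1 => c x).
  move=> x y e; apply: val_inj; case: (ltngtP x y) => h //.
    by exfalso; apply: H; exists x, y.
  by exfalso; apply: H; exists y, x; split.
by have := leq_card _ inj; rewrite card_ord ltnn.
Qed.

Lemma del_not_ult (Sigma : Type) (s : word Sigma) i j : i < j -> ~ Ult s ->
  ~ Ult (del s i j) /\ del s i j <> s.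
Proof.
move=> ij hs; split.
  move/Ult_per => [N [p [p0 H]]]; apply: hs.
  apply: (@per_Ult _ s (N + j) p); split => // n hn.
  have := H (n - (j - i)) ltac:(lia); rewrite /del.
  have ->: (n - (j - i) + p < i) = false by lia.
  have ->: (n - (j - i) < i) = false by lia.
  have ->: n - (j - i) + p + (j - i) = n + p by lia.
  by have ->: n - (j - i) + (j - i) = n by lia.
move=> e; apply: hs; apply: (@per_Ult _ s i (j - i)); split; first lia.
move=> n hn; have := congr1 (fun f => f n) e; rewrite /del /=.
by have ->: (n < i) = false by lia.
Qed.

Lemma ult_count (Sigma : finType) (x0 : Sigma) : countable_set (@Ult Sigma).
Proof.
exists (fun n => match @unpickle (seq Sigma * seq Sigma)%type n with
  | Some (u, v) => fun k => if k < size u then nth x0 u k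
                            else nth x0 v ((k - size u) %% size v)
  | None => fun _ => x0 end).
move=> s [u [v [hv H]]]; exists (pickle (u, v)); rewrite pickleK.
apply: functional_extensionality => k /=; rewrite (H k).
case: ltnP => h; first by apply: set_nth_default.
by apply: set_nth_default; rewrite ltn_pmod //; case: v hv {H}.
Qed.

Lemma ult_tau (Sigma : finType) z : tau_open z (@Ult Sigma).
Proof.
case: z; apply: ult_open => s hs; [exact: single_reg | split].
  exact: single_reg.
exact: single_closed.
Qed.

Lemma tau_gen (Sigma : finType) z (U : word Sigma -> Prop) :
  tau_open z U -> colorable U.
Proof. by case: z => /=; apply: gen_col => // L []. Qed.

Theorem mainTheorem15 (Sigma : finType) (hS : 1 < #|Sigma|) (z : topo_choice) :
  perfect_in z (fun s : word Sigma => ~ Ult s)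
  /\ countable_set (@Ult Sigma)
  /\ tau_open z (@Ult Sigma).
Proof.
have ho := ult_tau Sigma z.
split; [split|split].
- rewrite /tau_closed; case: z ho => /= ho; apply: (go_ext ho) => x;
    (split; [by move=> h nh; apply: nh | exact: NNPP]).
- move=> s hs U hU Us; have [T [c hc]] := tau_gen hU Us.
  have [i [j [ij e]]] := pigeon c.
  have [h1 h2] := del_not_ult ij hs.
  by exists (del s i j); split => //; split => //; apply: hc.
- have : 0 < #|Sigma| by lia.
  by case/card_gt0P => x0 _; apply: ult_count.
- exact: ho.
Qed.
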